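(* Let $n\geq 2$ and let $C$ be an all-ones CRC in $G_n$ with covering radius $\rho\geq 1$, $c_1=1$, $\mathbf{0}\in C$ and $-e_n\in C$. Then for any two distinct slice pairs $A,B\subseteq C$ lying in the same $s$-slice, $d(x,y)\geq 4$ for all $x\in A$, $y\in B$.
   Context: $G_n$: vertex set $\mathbb{Z}^n$, $x\sim y$ iff $\sum_i|x_i-y_i|=1$, $d$ its distance; $e_i$ the $i$-th unit vector. For a code $C$ with covering radius $\rho$, $C_i=\{v:d(v,C)=i\}$. $C$ is a CRC if for all $i,j$ every vertex of $C_i$ has the same number $\alpha_{ij}$ of neighbours in $C_j$, with $\alpha_{ij}=0$ for $|i-j|>1$; $a_i=\alpha_{ii}$, $c_i=\alpha_{i,i-1}$. $C$ is all-ones if $a_i=1$ for all $i$. For $s\in\mathbb{Z}$, the $s$-slice is $\{x: x_n\in\{2s,2s-1\}\}$; a slice pair is $\{x,x-e_n\}$ with $x_n=2s$ for some $s$. *)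

(* Defs.v *)
From HB Require Import structures.
From mathcomp Require Import all_boot all_order all_algebra.
From mathcomp Require Import boolp.
Set Implicit Arguments. Unset Strict Implicit. Unset Printing Implicit Defensive.
Import Order.TTheory GRing.Theory Num.Theory.
Local Open Scope ring_scope.

(* Vertices of G_n: integer vectors indexed by 'I_n (coordinates 0..n-1). *)
Definition vtx (n : nat) := {ffun 'I_n -> int}.

Definition evec (n : nat) (k : 'I_n) : vtx n := [ffun j => ((j == k) : nat)%:Z].

(* e_n of the paper = unit vector along the last coordinate (index n-1) *)
Definition elast (n : nat) : vtx n := [ffun j : 'I_n => ((val j == n.-1)%N : nat)%:Z].

Definition xlast (n : nat) (x : vtx n) : int := \sum_(j < n | val j == n.-1) x j.

(* graph distance of G_n (the L1 distance) *)
Definition dist (n : nat) (x y : vtx n) : nat := (\sum_(i < n) `|x i - y i|)%N.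

(* the 2n neighbours of v: v + e_k (b = true) and v - e_k (b = false) *)
Definition nbr (n : nat) (v : vtx n) (p : 'I_n * bool) : vtx n :=
  v + (if p.2 then evec p.1 else - evec p.1).

Definition dist_to (n : nat) (C : vtx n -> Prop) (v : vtx n) (i : nat) : Prop :=
  (exists2 c, C c & dist v c = i) /\ (forall c, C c -> (i <= dist v c)%N).

Definition covering_radius (n : nat) (C : vtx n -> Prop) (rho : nat) : Prop :=
  (forall v, exists2 c, C c & (dist v c <= rho)%N) /\ (exists v, dist_to C v rho).

Definition nb_count (n : nat) (C : vtx n -> Prop) (j : nat) (v : vtx n) : nat :=
  #|[set p : 'I_n * bool | `[< dist_to C (nbr v p) j >]]|.

Definition is_CRC (n : nat) (C : vtx n -> Prop) (alpha : nat -> nat -> nat) : Prop :=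
  (forall (i j : nat) (v : vtx n), dist_to C v i -> nb_count C j v = alpha i j) /\
  (forall i j : nat, (j.+1 < i)%N \/ (i.+1 < j)%N -> alpha i j = 0%N).

(* Main.v *)
Require Import Defs.
From HB Require Import structures.
From mathcomp Require Import all_boot all_order all_algebra.
From mathcomp Require Import boolp zify.
Import Order.TTheory GRing.Theory Num.Theory.
Set Implicit Arguments. Unset Strict Implicit. Unset Printing Implicit Defensive.
Local Open Scope ring_scope.

Lemma nbrE n (v : vtx n) p j :
  nbr v p j = v j + (if p.2 then ((j == p.1):nat)%:Z else - ((j == p.1):nat)%:Z).
Proof. by rewrite /nbr; case: p.2; rewrite !ffunE. Qed.

Lemma dist_sym n (x y : vtx n) : dist x y = dist y x.
Proof. rewrite /dist; apply: eq_bigr => i _; lia. Qed.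

Lemma distxx n (x : vtx n) : dist x x = 0%N.
Proof. rewrite /dist big1 // => i _; rewrite subrr. by []. Qed.

Lemma dist0 n (x y : vtx n) : dist x y = 0%N -> x = y.
Proof.
move=> /eqP; rewrite /dist sum_nat_eq0 => /forallP h.
apply/ffunP => i; have := h i; by rewrite implyTb absz_eq0 subr_eq0 => /eqP.
Qed.

Lemma dist_nbr n (v : vtx n) p : dist v (nbr v p) = 1%N.
Proof.
rewrite /dist (bigD1 p.1) //= big1 => [|j hj].
  rewrite nbrE eqxx /=; case: p.2; lia.
rewrite nbrE (negbTE hj) /=; case: p.2; lia.
Qed.

Lemma nbr_inv n (v : vtx n) p : nbr (nbr v p) (p.1, ~~ p.2) = v.
Proof. apply/ffunP => j; rewrite !nbrE /=; case: p.2 => /=; lia. Qed.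

Lemma nbrC n (v : vtx n) p q : nbr (nbr v p) q = nbr (nbr v q) p.
Proof. apply/ffunP => j; rewrite !nbrE; case: p.2; case: q.2; lia. Qed.

Lemma nbrL n (v : vtx n) p L : p.1 != L -> nbr v p L = v L.
Proof. move=> h; rewrite nbrE eq_sym (negbTE h); case: p.2; lia. Qed.

Lemma nbrLm n (v : vtx n) L : nbr v (L, false) L = v L - 1.
Proof. rewrite nbrE eqxx /=; lia. Qed.

Lemma dt0 n (C : vtx n -> Prop) v : C v -> dist_to C v 0.
Proof. move=> Cv; split => //; exists v => //; exact: distxx. Qed.

Lemma dt1 n (C : vtx n -> Prop) v c : ~ C v -> C c -> dist v c = 1%N -> dist_to C v 1.
Proof.
move=> nC Cc d; split; first by exists c.
move=> c' Cc'; rewrite lt0n; apply/eqP => /dist0 e; subst; contradiction.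
Qed.

Lemma uniq_nb n (C : vtx n -> Prop) alpha i j v p q :
  is_CRC C alpha -> alpha i j = 1%N -> dist_to C v i ->
  dist_to C (nbr v p) j -> dist_to C (nbr v q) j -> nbr v p = nbr v q.
Proof.
case=> H _ a1 dv dp dq; apply/eqP; apply/negPn/negP => ne.
have := H i j v dv; rewrite a1 /nb_count => hc.
have pq : p != q by apply: contraNneq ne => ->.
have : (#|[set p; q]| <= 1)%N.
  rewrite -hc; apply: subset_leq_card; apply/subsetP => r.
  by rewrite !inE => /orP [] /eqP ->; apply/asboolP.
by rewrite cards2 pq.
Qed.

Lemma ar1 (a b : int) (S T : nat) : S = T -> a != b -> a < b -> (`|(a + 1 - b)%R| + S).+1 = (`|(a - b)%R| + T)%N.
Proof. move=> ->; lia. Qed.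
Lemma ar2 (a b : int) (S T : nat) : S = T -> a != b -> ~~ (a < b) -> (`|(a - 1 - b)%R| + S).+1 = (`|(a - b)%R| + T)%N.
Proof. move=> ->; lia. Qed.

Lemma step n (L : 'I_n) (x y : vtx n) : x != y -> x L = y L ->
  exists p, p.1 != L /\ (dist (nbr x p) y).+1 = dist x y.
Proof.
move=> ne eL.
have : [exists i, x i != y i].
  apply: contraR ne => /existsPn h; apply/eqP/ffunP => i; exact/eqP/negPn/h.
move=> /existsP [i hi].
have iL : i != L by apply: contraNneq hi => ->; rewrite eL.
exists (i, x i < y i); split => //.
rewrite /dist (bigD1 i) //= [in RHS](bigD1 i) //=.
have -> : (\sum_(j < n | j != i) `|(nbr x (i, x i < y i) j - y j)%R|)%N
        = (\sum_(j < n | j != i) `|(x j - y j)%R|)%N.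
  apply: eq_bigr => j hj; rewrite nbrE /= (negbTE hj); case: (x i < y i); lia.
rewrite nbrE /= eqxx /=.
case: (boolP (x i < y i)) => h; move: hi h.
  by apply: ar1.
by apply: ar2.
Qed.

Lemma dist_mono n (x y a b : vtx n) :
  (forall i, `|(x i - y i)%R| <= `|(a i - b i)%R|)%N -> (dist x y <= dist a b)%N.
Proof. by move=> h; apply: leq_sum => i _. Qed.

Theorem mainTheorem9 (n : nat) (C : vtx n -> Prop) (rho : nat)
    (alpha : nat -> nat -> nat) :
  (2 <= n)%N ->
  covering_radius C rho -> (1 <= rho)%N ->
  is_CRC C alpha ->
  (forall i : nat, (i <= rho)%N -> alpha i i = 1%N) ->   (* all-ones: a_i = 1 *)
  alpha 1%N 0%N = 1%N ->                                 (* c_1 = 1 *)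
  C 0 -> C (- elast n) ->
  forall (s : int) (x y : vtx n),
    xlast x = 2 * s -> xlast y = 2 * s -> x != y ->
    C x -> C (x - elast n) -> C y -> C (y - elast n) ->
    forall a b : vtx n, a \in [:: x; x - elast n] -> b \in [:: y; y - elast n] ->
      (4 <= dist a b)%N.
Proof.
case: n C => [|m] C //.
move=> n2 cr r1 crc aa c1 _ _ s x y hx hy xy Cx Cx' Cy Cy' a b ha hb.
pose L := @ord_max m.
have xlE : forall v : vtx m.+1, xlast v = v L.
  by move=> v; rewrite /xlast (big_pred1 L).
have eE : elast m.+1 = evec L.
  by apply/ffunP => j; rewrite !ffunE.
have eL : x L = y L by rewrite -!xlE hx hy.
have eLi : forall i : 'I_m.+1, val i = m -> x i = y i.
  by move=> i hi; have -> : i = L by apply: val_inj.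
have key : (4 <= dist x y)%N.
  rewrite leqNgt; apply/negP => lt4.
  have a00 : alpha 0%N 0%N = 1%N := aa 0%N isT.
  have a11 : alpha 1%N 1%N = 1%N := aa 1%N r1.
  have Hx0 : dist_to C x 0 := dt0 Cx.
  have ex : x - elast m.+1 = nbr x (L, false) by rewrite eE.
  have Cx'' : C (nbr x (L, false)) by rewrite -ex.
  have [p [pL hp]] := step xy eL.
  have uL : nbr x p L = x L := nbrL x pL.
  have nCu : ~ C (nbr x p).
    move=> Cu.
    have := uniq_nb crc a00 Hx0 (dt0 Cu) (dt0 Cx'') => /(congr1 (fun f : vtx m.+1 => f L)).
    rewrite uL nbrLm; lia.
  have Hu1 : dist_to C (nbr x p) 1 by apply: (dt1 nCu Cx); rewrite dist_sym dist_nbr.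
  have ux := nbr_inv x p.
  have uy : nbr x p != y by apply/eqP => e; apply: nCu; rewrite e.
  have uyL : nbr x p L = y L by rewrite uL.
  have [q [qL hq]] := step uy uyL.
  case: (boolP (dist (nbr (nbr x p) q) y == 0%N)) => [/eqP /dist0 wy | w0].
    have := uniq_nb (p := (p.1, ~~ p.2)) (q := q) crc c1 Hu1.
    rewrite ux wy => h; have := h (dt0 Cx) (dt0 Cy); apply/eqP; exact: xy.
  have dw1 : dist (nbr (nbr x p) q) y = 1%N by move: lt4 w0; rewrite -hp -hq; lia.
  have nCw : ~ C (nbr (nbr x p) q).
    move=> Cw.
    have := uniq_nb (p := (p.1, ~~ p.2)) (q := q) crc c1 Hu1.
    rewrite ux => h; have := h (dt0 Cx) (dt0 Cw) => e.
    move: dw1 hp hq lt4; rewrite -e; lia.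
  have Hw1 : dist_to C (nbr (nbr x p) q) 1 := dt1 nCw Cy dw1.
  have zE : nbr (nbr x p) (L, false) = nbr (nbr x (L, false)) p := nbrC x p (L, false).
  case: (pselect (C (nbr (nbr x p) (L, false)))) => Cz.
    have := uniq_nb (p := (p.1, ~~ p.2)) (q := (L, false)) crc c1 Hu1.
    rewrite ux => h; have := h (dt0 Cx) (dt0 Cz) => /(congr1 (fun f : vtx m.+1 => f L)).
    rewrite nbrLm uL; lia.
  have Hz1 : dist_to C (nbr (nbr x p) (L, false)) 1.
    by apply: (dt1 Cz Cx''); rewrite zE dist_sym dist_nbr.
  have := uniq_nb crc a11 Hu1 Hz1 Hw1 => /(congr1 (fun f : vtx m.+1 => f L)).
  rewrite nbrLm (nbrL _ qL) uL; lia.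
have le1 : (dist x y <= dist x (y - elast m.+1)%R)%N.
  apply: dist_mono => i; rewrite !ffunE; case: (boolP (val i == m)) => h /=.
    rewrite (eLi _ (eqP h)); lia.
  lia.
have le2 : (dist x y <= dist (x - elast m.+1)%R y)%N.
  apply: dist_mono => i; rewrite !ffunE; case: (boolP (val i == m)) => h /=.
    rewrite (eLi _ (eqP h)); lia.
  lia.
have e3 : dist (x - elast m.+1) (y - elast m.+1) = dist x y.
  by rewrite /dist; apply: eq_bigr => i _; rewrite !ffunE opprB addrA subrK.
move: ha hb; rewrite !inE => /orP [] /eqP -> /orP [] /eqP ->.
- exact: key.
- exact: (leq_trans key le1).
- exact: (leq_trans key le2).
- by rewrite e3.
Qed.
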